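(* For $i=1,2$ let $R_i$ be a unital ring whose additive group is torsion-free of rank $n$, and let $M_i\subseteq R_i^\times$ be a submonoid. Let $\mathcal L$ be a subgroup of $R_1$ of rank $n$, and assume that ${\rm span}_{\mathbb Z}(M_1)$ has finite index in $R_1$. If there are an injective additive group homomorphism $\mathfrak b\colon\mathbb Q\mathcal L\to\mathbb QR_2$ and a group homomorphism $\mathfrak t\colon\langle M_1\rangle\to\langle M_2\rangle$ such that $\mathfrak b(ax)=\mathfrak t(a)\mathfrak b(x)$ for all $a\in M_1$ and $x\in\mathbb Q\mathcal L$, then there is a unital $\mathbb Q$-algebra isomorphism $\varphi\colon\mathbb QR_1\to\mathbb QR_2$ with $\varphi|_{\langle M_1\rangle}=\mathfrak t$.
   Context: The rank of $R$ is $\dim_{\mathbb Q}\mathbb Q\otimes_{\mathbb Z}R$; $\mathbb QR=\mathbb Q\otimes_{\mathbb Z}R$ (an $n$-dimensional $\mathbb Q$-algebra containing $R$), and for a subgroup $\mathcal L\subseteq R$, $\mathbb Q\mathcal L=\mathbb Q\otimes\mathcal L\subseteq\mathbb QR$. $R^\times$ is the monoid of left regular elements of $R$ (those $a$ with $x\mapsto ax$ injective on $R$); these are invertible in $\mathbb QR$, and $\langle M\rangle$ denotes the subgroup of the unit group $(\mathbb QR)^*$ generated by $M$. *)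

(* Defs.v *)
From HB Require Import structures.
From mathcomp Require Import all_boot all_order all_algebra all_field.
Set Implicit Arguments. Unset Strict Implicit. Unset Printing Implicit Defensive.
Import GRing.Theory.
Local Open Scope ring_scope.

(* Convention: a unital ring R whose additive group is torsion-free of rank n
   is modelled as a unital subring R of the n-dimensional Q-algebra A = Q (x) R.
   Subsets of A are Prop-valued predicates. *)

Section Defs.
Variable A : falgType rat.

Definition is_subring (R : A -> Prop) : Prop :=
  [/\ R 1, forall x y, R x -> R y -> R (x - y) & forall x y, R x -> R y -> R (x * y)].

Definition is_addsubgroup (S : A -> Prop) : Prop :=
  S 0 /\ forall x y, S x -> S y -> S (x - y).

(* rank of a subgroup S: the maximal number of Q-linearly (= Z-linearly)
   independent elements of S *)
Definition has_rank (S : A -> Prop) (n : nat) : Prop :=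
  (exists s : seq A, [/\ size s = n, forall x, x \in s -> S x & free s]) /\
  (forall s : seq A, (forall x, x \in s -> S x) -> free s -> (size s <= n)%N).

(* Q L = Q (x) L, viewed inside A *)
Definition Qspan (S : A -> Prop) : A -> Prop :=
  fun x => exists m : nat, (0 < m)%N /\ S (x *+ m).

Definition left_regular (R : A -> Prop) (a : A) : Prop :=
  R a /\ forall x y, R x -> R y -> a * x = a * y -> x = y.

Definition is_submonoid_leftreg (R M : A -> Prop) : Prop :=
  [/\ forall a, M a -> left_regular R a, M 1 & forall a b, M a -> M b -> M (a * b)].

Inductive Zspan (M : A -> Prop) : A -> Prop :=
| Zspan_in x : M x -> Zspan M x
| Zspan_0 : Zspan M 0
| Zspan_sub x y : Zspan M x -> Zspan M y -> Zspan M (x - y).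

Definition finite_index (S R : A -> Prop) : Prop :=
  (forall x, S x -> R x) /\
  exists c : seq A, (forall r, r \in c -> R r) /\
    forall x, R x -> exists2 r, r \in c & S (x - r).

Inductive gen_group (M : A -> Prop) : A -> Prop :=
| gg_in x : M x -> gen_group M x
| gg_one : gen_group M 1
| gg_inv x : gen_group M x -> gen_group M x^-1
| gg_mul x y : gen_group M x -> gen_group M y -> gen_group M (x * y).

End Defs.

(* Main.v *)
Require Import Defs.
From HB Require Import structures.
From mathcomp Require Import all_boot all_order all_algebra all_field.
Import GRing.Theory Num.Theory.
Local Open Scope ring_scope.

Section Gen.
Variable A : falgType rat.
Implicit Types S : A -> Prop.

Lemma asg_add S x y : is_addsubgroup S -> S x -> S y -> S (x + y).
Proof.
move=> [S0 SB] Sx Sy; have := SB x (0 - y) Sx (SB _ _ S0 Sy).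
by rewrite sub0r opprK.
Qed.

Lemma asg_opp S x : is_addsubgroup S -> S x -> S (- x).
Proof. by move=> [S0 SB] Sx; have := SB _ _ S0 Sx; rewrite sub0r. Qed.

Lemma asg_nat S x k : is_addsubgroup S -> S x -> S (x *+ k).
Proof.
move=> hS Sx; elim: k => [|k IH]; first by rewrite mulr0n; case: hS.
by rewrite mulrS; apply: asg_add.
Qed.

Lemma asg_int S x z : is_addsubgroup S -> S x -> S (x *~ z).
Proof.
move=> hS Sx; case: z => k; first exact: asg_nat.
by rewrite NegzE mulrNz; apply: asg_opp => //; apply: asg_nat.
Qed.

Lemma Qspan_in S x : S x -> Qspan S x.
Proof. by exists 1%N; rewrite mulr1n. Qed.

Lemma Qspan_add S x y : is_addsubgroup S -> Qspan S x -> Qspan S y -> Qspan S (x + y).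
Proof.
move=> hS [m [m0 Sm]] [k [k0 Sk]]; exists (m * k)%N; split.
  by rewrite muln_gt0 m0 k0.
rewrite mulrnDl; apply: asg_add => //; first by rewrite mulrnA; apply: asg_nat.
by rewrite mulnC mulrnA; apply: asg_nat.
Qed.

Lemma Qspan_scale S q x : is_addsubgroup S -> Qspan S x -> Qspan S (q *: x).
Proof.
move=> hS [m [m0 Sm]]; exists (m * `|denq q|)%N; split.
  by rewrite muln_gt0 m0 absz_gt0 denq_neq0.
have -> : (q *: x) *+ (m * `|denq q|) = (x *+ m) *~ numq q.
  rewrite -!scaler_nat -scaler_int !scalerA; congr (_ *: _).
  rewrite numqE natrM natr_absz gtr0_norm ?denq_gt0 //.
  by rewrite [RHS]mulrC [q * _]mulrC mulrA.
exact: asg_int.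
Qed.

Lemma full_Qspan S : is_addsubgroup S -> has_rank S (\dim {:A}) -> forall x, Qspan S x.
Proof.
move=> hS [[s [ss Ss fs]] _] x.
have sp : <<s>>%VS = fullv.
  by apply/eqP; rewrite eqEdim subvf /= (eqnP fs) ss leqnn.
have : x \in <<in_tuple s>>%VS by rewrite /= sp memvf.
move/coord_span => ->.
apply: (big_ind (Qspan S)).
- by exists 1%N; rewrite mulr1n; case: hS.
- by move=> ? ? ? ?; apply: Qspan_add.
- move=> i _; apply: Qspan_scale => //; apply: Qspan_in; apply: Ss.
  exact: mem_nth.
Qed.

End Gen.

Lemma additive_scale (U V : lmodType rat) (f : U -> V) :
  (forall x y, f (x + y) = f x + f y) -> forall q x, f (q *: x) = q *: f x.
Proof.
move=> fD.
have f0 : f 0 = 0 by apply: (addrI (f 0)); rewrite -fD !addr0.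
have fN x : f (- x) = - f x by apply: (addrI (f x)); rewrite -fD !subrr.
have fn x k : f (x *+ k) = f x *+ k.
  by elim: k => [|k IH]; rewrite ?mulr0n // !mulrS fD IH.
have fz x z : f (x *~ z) = f x *~ z.
  case: z => k; first exact: fn.
  by rewrite NegzE !mulrNz fN; congr (- _); apply: fn.
move=> q x.
have e : f (q *: x) *~ denq q = f x *~ numq q.
  by rewrite -!fz; congr f; rewrite -!scaler_int scalerA numqE mulrC.
have d0 : ((denq q)%:~R : rat) != 0 by rewrite intr_eq0 denq_neq0.
rewrite -[f (q *: x)]scale1r -(mulVf d0) -scalerA scaler_int e -scaler_int.
by rewrite scalerA numqE [q * _]mulrC mulrA mulVf // mul1r.
Qed.

Lemma inj_lin_surj (U V : vectType rat) (f : U -> V) :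
  (forall x y, f (x + y) = f x + f y) -> injective f ->
  \dim {:U} = \dim {:V} -> forall y, exists x, f x = y.
Proof.
move=> fD finj dimE y.
have lin_f : linear f by move=> k u v; rewrite fD (@additive_scale _ _ f fD).
pose flM := GRing.isLinear.Build _ _ _ _ f lin_f.
pose fL : {linear _ -> _} := HB.pack f flM.
pose h := linfun fL.
have hE : h =1 f by move=> u; rewrite /h lfunE.
have k0 : lker h == 0%VS by apply/lker0P => u v; rewrite !hE; apply: finj.
have : (y \in limg h).
  have -> : limg h = fullv.
    apply/eqP; rewrite eqEdim subvf /= limg_dim_eq; first by rewrite dimE.
    by rewrite (eqP k0) capv0.
  exact: memvf.
by case/memv_imgP => u _ ->; exists u; rewrite hE.
Qed.

Lemma pigeon (A : falgType rat) (M R : A -> Prop) r :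
  is_addsubgroup R -> finite_index (Zspan M) R -> R r ->
  exists2 k, (0 < k)%N & Zspan M (r *+ k).
Proof.
move=> hR [_ [c [cR cov]]] Rr.
have hex : forall i : 'I_(size c).+1, exists j : 'I_(size c), Zspan M (r *+ i - c`_j).
  move=> i; have [y yc Zy] := cov _ (@asg_nat _ _ _ i hR Rr).
  have lt : (index y c < size c)%N by rewrite index_mem.
  by exists (Ordinal lt); rewrite /= nth_index.
have [f hf] := @fin_all_exists _ (fun _ => 'I_(size c)) _ hex.
have : ~~ injectiveb f.
  apply/negP => /injectiveP/leq_card; rewrite !card_ord.
  by rewrite ltnn.
case/injectivePn => i [j ij fij].
have Zd : Zspan M (r *+ i - r *+ j).
  have := Zspan_sub (hf i) (hf j); rewrite fij.
  by rewrite opprB addrA subrK.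
case: (ltngtP i j) => hij.
- exists (j - i)%N; first by rewrite subn_gt0.
  rewrite (mulrnBr _ (ltnW hij)).
  have := Zspan_sub (Zspan_0 M) Zd.
  by rewrite sub0r opprB.
- by exists (i - j)%N; [rewrite subn_gt0 | rewrite (mulrnBr _ (ltnW hij))].
- by case/eqP: ij; apply: val_inj.
Qed.

Theorem proposition5p1 (n : nat) (A1 A2 : falgType rat)
  (R1 : A1 -> Prop) (R2 : A2 -> Prop) (M1 : A1 -> Prop) (M2 : A2 -> Prop)
  (L : A1 -> Prop) (b : A1 -> A2) (t : A1 -> A2) :
  \dim {: A1} = n -> \dim {: A2} = n ->
  is_subring R1 -> has_rank R1 n ->
  is_subring R2 -> has_rank R2 n ->
  is_submonoid_leftreg R1 M1 -> is_submonoid_leftreg R2 M2 ->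
  is_addsubgroup L -> (forall x, L x -> R1 x) -> has_rank L n ->
  finite_index (Zspan M1) R1 ->
  (forall x y, Qspan L x -> Qspan L y -> b (x + y) = b x + b y) ->
  (forall x y, Qspan L x -> Qspan L y -> b x = b y -> x = y) ->
  (forall a, gen_group M1 a -> gen_group M2 (t a)) ->
  (forall a c, gen_group M1 a -> gen_group M1 c -> t (a * c) = t a * t c) ->
  (forall a x, M1 a -> Qspan L x -> b (a * x) = t a * b x) ->
  exists phi : A1 -> A2,
    [/\ forall (q : rat) (x y : A1), phi (q *: x + y) = q *: phi x + phi y,
        forall x y : A1, phi (x * y) = phi x * phi y,
        phi 1 = 1,
        bijective phi
      & forall a, gen_group M1 a -> phi a = t a].
Proof.
move=> dim1 dim2 hR1 rk1 hR2 rk2 hM1 hM2 hL LR1 rkL fi bD binj tG tM bM.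
have QL : forall x, Qspan L x by apply: full_Qspan => //; rewrite dim1.
have bD' : forall x y, b (x + y) = b x + b y := fun x y => bD x y (QL x) (QL y).
have binj' : injective b := fun x y => binj x y (QL x) (QL y).
have bZ := @additive_scale _ _ b bD'.
have b0 : b 0 = 0 by have := bZ 0 0; rewrite !scale0r.
have bB x y : b (x - y) = b x - b y by rewrite -scaleN1r bD' bZ scaleN1r.
have dimE : \dim {:A1} = \dim {:A2} by rewrite dim1 dim2.
have [x0 hx0] := @inj_lin_surj _ _ b bD' binj' dimE 1.
pose P y := forall x, b (y * x) = b (y * x0) * b x.
have PM a : M1 a -> P a.
  by move=> Ma x; rewrite (bM a x Ma (QL x)) (bM a x0 Ma (QL x0)) hx0 mulr1.
have PZ y : Zspan M1 y -> P y.
  elim => [a Ma | | u v _ Pu _ Pv].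
  - exact: PM.
  - by move=> x; rewrite !mul0r b0 mul0r.
  - by move=> x; rewrite !mulrBl !bB mulrBl (Pu x) (Pv x).
have PS q y : P y -> P (q *: y).
  by move=> Py x; rewrite -!scalerAl !bZ (Py x) scalerAl.
have hR1a : is_addsubgroup R1.
  case: hR1 => R1_1 R1B _; split => //.
  by have := R1B 1 1 R1_1 R1_1; rewrite subrr.
have Pall y : P y.
  have rk1' : has_rank R1 (\dim {:A1}) by rewrite dim1.
  have [m [m0 Rm]] := @full_Qspan _ _ hR1a rk1' y.
  have [k k0 Zk] := @pigeon _ _ _ _ hR1a fi Rm.
  have := PS ((m * k)%:R^-1) _ (PZ _ Zk).
  rewrite -mulrnA -scaler_nat scalerA mulVf ?scale1r //.
  by rewrite pnatr_eq0 -lt0n muln_gt0 m0 k0.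
pose phi y := b (y * x0).
have phiL q x y : phi (q *: x + y) = q *: phi x + phi y.
  by rewrite /phi mulrDl -scalerAl bD' bZ.
have phiM x y : phi (x * y) = phi x * phi y.
  by rewrite /phi -mulrA Pall.
have phi1 : phi 1 = 1 by rewrite /phi mul1r hx0.
have phiD x y : phi (x + y) = phi x + phi y.
  by have := phiL 1 x y; rewrite !scale1r.
have phiB x y : phi (x - y) = phi x - phi y by rewrite /phi mulrBl bB.
have phiinj : injective phi.
  move=> u v e; apply/eqP; rewrite -subr_eq0; apply/eqP.
  have := Pall (u - v) 1; rewrite mulr1 -/(phi (u - v)) phiB e subrr mul0r -b0.
  exact: binj'.
have phisurj := @inj_lin_surj _ _ phi phiD phiinj dimE.
have phibij : bijective phi.
  have ex y : exists x, phi x == y.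
    by have [x hx] := phisurj y; exists x; apply/eqP.
  exists (fun y => xchoose (ex y)) => [x|y].
    by apply: phiinj; apply/eqP; apply: (xchooseP (ex (phi x))).
  by apply/eqP; apply: (xchooseP (ex y)).
have phiMa a : M1 a -> phi a = t a.
  by move=> Ma; rewrite /phi (bM a x0 Ma (QL x0)) hx0 mulr1.
have t1 : t 1 = 1 by case: hM1 => _ M11 _; rewrite -phiMa.
have inv_of (z w : A2) : w \is a GRing.unit -> z * w = 1 -> z = w^-1.
  by move=> uw e; rewrite -[z](mulrK uw) e mul1r.
exists phi; split => //.
move=> a0; elim => [a Ma | | x Gx IH | x y Gx IHx Gy IHy].
- exact: phiMa.
- by rewrite phi1 t1.
- case: (boolP (x \is a GRing.unit)) => ux; last by rewrite (invr_out ux).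
  have e1 : phi x^-1 * phi x = 1 by rewrite -phiM mulVr.
  have e2 : phi x * phi x^-1 = 1 by rewrite -phiM mulrV.
  have upx : phi x \is a GRing.unit by apply/unitrP; exists (phi x^-1).
  rewrite (inv_of _ _ upx e1); apply/esym/inv_of; rewrite ?IH //.
    by rewrite -IH.
  by rewrite -(tM _ _ (gg_inv Gx) Gx) mulVr.
- by rewrite phiM tM // IHx IHy.
Qed.
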